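(* Let $S$ be a standard graded polynomial ring over a field, and let $I$ and $J$ be homogeneous square-free monomial ideals of $S$ generated in degrees $n_1$ and $n_2$ respectively, with $J\subseteq I$ and $n_2>n_1$. Let $\{m_1,\dots,m_k\}$ be the set of minimal monomial generators of $I$. Put $A=\operatorname{reg}(J:m_1)+n_1$, $B=\max\{\operatorname{reg}((J,m_1,\dots,m_l):m_{l+1})+n_1 : 1\leq l\leq k-1\}$ and $C=\operatorname{reg}(I)$. Then $\operatorname{reg}(J)\leq\max\{A,B,C\}$.
   Context: For a finitely generated graded $S$-module $M$, $\operatorname{reg}(M)=\max\{j-i : \operatorname{Tor}_i^S(M,K)_j\neq 0\}$. ''Generated in degree $d$'' means all minimal generators have degree $d$. For an ideal $J$ and monomial $m$, $(J:m)=\{f\in S: fm\in J\}$. *)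

(* Defs.v *)
From HB Require Import structures.
From mathcomp Require Import all_boot all_order all_algebra.
Set Implicit Arguments. Unset Strict Implicit. Unset Printing Implicit Defensive.
Import GRing.Theory.
Local Open Scope ring_scope.

(* Monomials of S = K[x_0,...,x_(n-1)] are encoded by exponent vectors. *)
Definition mono (n : nat) := {ffun 'I_n -> nat}.

(* A monomial ideal is encoded by its membership predicate on monomials
   (a monomial ideal is spanned over K by the monomials it contains). *)
Definition monideal (n : nat) := mono n -> bool.

Definition mdvd n (m b : mono n) : bool := [forall l, (m l <= b l)%N].

Definition gen n (gs : seq (mono n)) : monideal n :=
  fun b => has (fun g => mdvd g b) gs.

Definition addgen n (J : monideal n) (gs : seq (mono n)) : monideal n :=
  fun b => J b || gen gs b.

Definition colon n (J : monideal n) (m : mono n) : monideal n :=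
  fun b => J [ffun l => (b l + m l)%N].

Definition squarefree n (m : mono n) : bool := [forall l, (m l <= 1)%N].
Definition mdeg n (m : mono n) : nat := (\sum_(l < n) m l)%N.

(* ---------- Tor_i^S(J, K)_j via the Koszul resolution of K ----------
   Tor_i^S(J,K) = H_i(J (x) K(x_0..x_(n-1))).  The degree-j part of
   J (x) K_i has K-basis  x^b (x) e_F  with |F| = i, x^b in J,
   deg b + |F| = j.  Basis candidates are indexed by pairs (F, b) with
   entries of b bounded by j (automatically true for valid ones). *)
Definition KIdx (n j : nat) := ({set 'I_n} * {ffun 'I_n -> 'I_j.+1})%type.

Definition kexp n j (x : KIdx n j) : mono n := [ffun l => nat_of_ord (x.2 l)].

Definition kvalid n (J : monideal n) (i j : nat) (x : KIdx n j) : bool :=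
  [&& #|x.1| == i, (mdeg (kexp x) + #|x.1|)%N == j & J (kexp x)].

Definition ksign (K : fieldType) n (k : 'I_n) (F : {set 'I_n}) : K :=
  (-1) ^+ #|[set l in F | (l < k)%N]|.

(* coefficient of basis vector y in d(x), d(x^b e_F) =
   sum_{k in F} sign(k,F) x^(b+e_k) e_(F\k) *)
Definition kentry (K : fieldType) n j (x y : KIdx n j) : K :=
  \sum_(k in x.1)
    (if (y.1 == x.1 :\ k) && [forall l, (nat_of_ord (y.2 l) == x.2 l + (l == k))%N]
     then ksign K k x.1 else 0).

Definition kN n j := #|{: KIdx n j}|.

Definition kdiff (K : fieldType) n j : 'M[K]_(kN n j) :=
  \matrix_(u, v) kentry K (enum_val u) (enum_val v).

Definition kproj (K : fieldType) n (J : monideal n) (i j : nat) : 'M[K]_(kN n j) :=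
  \matrix_(u, v) (if (u == v) && kvalid J i (enum_val u) then 1 else 0).

(* Tor_i^S(J, K)_j <> 0 : cycles in degree i not all boundaries *)
Definition Tor_nz (K : fieldType) n (J : monideal n) (i j : nat) : bool :=
  ~~ ((kproj K J i j :&: kermx (kdiff K n j)) <= kproj K J i.+1 j *m kdiff K n j)%MS.

Definition reg_le (K : fieldType) n (J : monideal n) (r : int) : Prop :=
  forall i j : nat, Tor_nz K J i j -> (j%:Z - i%:Z <= r)%R.

(* Main.v *)
Require Import Defs.
From HB Require Import structures.
From mathcomp Require Import all_boot all_order all_algebra.
From mathcomp Require Import zify ring.
Set Implicit Arguments. Unset Strict Implicit. Unset Printing Implicit Defensive.
Import GRing.Theory.
Local Open Scope ring_scope.

Definition ek n (k : 'I_n) : mono n := [ffun l => nat_of_bool (l == k)].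
Definition madd n (a b : mono n) : mono n := [ffun l => (a l + b l)%N].
Definition msub n (a b : mono n) : mono n := [ffun l => (a l - b l)%N].
Definition vec (K : fieldType) n := {set 'I_n} -> mono n -> K.
Definition Dk (K : fieldType) n (f : vec K n) : vec K n := fun G c =>
  \sum_(k | (k \notin G) && (0 < c k)%N) ksign K k G * f (k |: G) (msub c (ek k)).

Lemma sign_sq (K : fieldType) n (k : 'I_n) (G : {set 'I_n}) : ksign K k G * ksign K k G = 1.
Proof. by rewrite /ksign -expr2 sqrr_sign. Qed.

Lemma ksign_U1_self (K : fieldType) n (k : 'I_n) (G : {set 'I_n}) : ksign K k (k |: G) = ksign K k G.
Proof.
rewrite /ksign; congr (_ ^+ _); apply: eq_card => x; rewrite !inE.
by case: (eqVneq x k) => [->|]; rewrite ?ltnn ?andbF.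
Qed.

Lemma ksign_D1_self (K : fieldType) n (k : 'I_n) (G : {set 'I_n}) : ksign K k (G :\ k) = ksign K k G.
Proof.
rewrite /ksign; congr (_ ^+ _); apply: eq_card => x; rewrite !inE.
by case: (eqVneq x k) => [->|]; rewrite ?ltnn ?andbF.
Qed.

Lemma ksign_U1 (K : fieldType) n (k l : 'I_n) (G : {set 'I_n}) : k \notin G ->
  ksign K l (k |: G) = ksign K l G * (-1) ^+ (k < l)%N.
Proof.
move=> kG; rewrite /ksign -exprD; congr (_ ^+ _).
case: (ltnP k l) => kl.
- have -> : [set x in k |: G | (x < l)%N] = k |: [set x in G | (x < l)%N].
    by apply/setP => x; rewrite !inE; case: (eqVneq x k) => [->|]; rewrite ?kl.
  by rewrite cardsU1 inE (negbTE kG) /= addnC.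
- have -> : [set x in k |: G | (x < l)%N] = [set x in G | (x < l)%N].
    apply/setP => x; rewrite !inE; case: (eqVneq x k) => [->|] //=.
    by rewrite ltnNge kl andbF.
  by rewrite addn0.
Qed.

Lemma ksign_swap (K : fieldType) n (k l : 'I_n) (G : {set 'I_n}) : k != l -> k \notin G -> l \notin G ->
  ksign K l (k |: G) * ksign K k (l |: G) = - (ksign K k G * ksign K l G).
Proof.
move=> kl kG lG; rewrite ksign_U1 // ksign_U1 //.
have E : (-1)^+(k < l)%N * (-1)^+(l < k)%N = -1 :> K.
  case: (ltngtP k l) => h /=; first by rewrite expr1 expr0 mulr1.
    by rewrite expr0 expr1 mul1r.
  by move: kl; rewrite (val_inj h) eqxx.
by rewrite mulrACA E mulrN1 [ksign K l G * _]mulrC.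
Qed.

Lemma antisym_sum (K : fieldType) n (A : 'I_n -> 'I_n -> K) :
  (forall k, A k k = 0) -> (forall k l, A k l = - A l k) ->
  \sum_k \sum_l A k l = 0.
Proof.
move=> A0 Aa.
have split : forall k l, A k l = (if (k < l)%N then A k l else 0)
   + (if (l < k)%N then A k l else 0).
  move=> k l; case: (ltngtP k l) => h; rewrite ?addr0 ?add0r //.
  by rewrite (val_inj h) A0.
transitivity (\sum_(k : 'I_n) \sum_(l : 'I_n) (if (k < l)%N then A k l else 0)
   + \sum_(k : 'I_n) \sum_(l : 'I_n) (if (l < k)%N then A k l else 0)).
  rewrite -big_split /=; apply eq_bigr => k _; rewrite -big_split /=.
  by apply eq_bigr => l _; rewrite -split.
rewrite [X in _ + X]exchange_big /=.
rewrite -big_split /= big1 // => k _; rewrite -big_split /= big1 // => l _.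
by rewrite Aa; case: ifP => _; rewrite ?oppr0 ?addNr ?addr0.
Qed.


Lemma DD0 (K : fieldType) n (f : vec K n) G c : Dk (Dk f) G c = 0.
Proof.
rewrite /Dk.
pose cond k l := [&& k != l, k \notin G, l \notin G, (0 < c k)%N & (0 < c l)%N].
pose A k l := if cond k l then ksign K k G * (ksign K l (k |: G) *
    f (l |: (k |: G)) (msub (msub c (ek k)) (ek l))) else 0.
transitivity (\sum_k \sum_l A k l); last first.
  apply: antisym_sum => [k|k l]; first by rewrite /A /cond eqxx.
  rewrite /A /cond; case: (eqVneq k l) => [->|kl]; first by rewrite oppr0.
  rewrite /=.
  have -> : [&& l \notin G, k \notin G, (0 < c l)%N & (0 < c k)%N] =
    [&& k \notin G, l \notin G, (0 < c k)%N & (0 < c l)%N].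
    by case: (k \in G); case: (l \in G); case: (0 < c k)%N; case: (0 < c l)%N.
  case: ifP => [/and4P [kG lG _ _]|_]; last by rewrite oppr0.
  have -> : l |: (k |: G) = k |: (l |: G) by rewrite setUCA.
  have -> : msub (msub c (ek k)) (ek l) = msub (msub c (ek l)) (ek k).
    by apply/ffunP => p; rewrite !ffunE subnAC.
  rewrite !mulrA -[RHS]mulNr; congr (_ * _).
  rewrite !ksign_U1 //.
  case: (ltngtP k l) => h /=; rewrite ?expr0 ?expr1; try ring.
  by move: kl; rewrite (val_inj h) eqxx.
rewrite big_mkcond /=; apply eq_bigr => k _.
case: ifP => Pk; last first.
  rewrite big1 // => l _; rewrite /A /cond.
  by case: ifP => // /and5P [_ kG _ ck _]; rewrite kG ck in Pk.
rewrite mulr_sumr big_mkcond /=; apply eq_bigr => l _.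
move: Pk => /andP [kG ck].
rewrite /A /cond kG ck !inE !ffunE /= negb_or.
case: (eqVneq l k) => [->|lk] /=; first by [].
by rewrite subn0.
Qed.

Definition pk n (a : mono n) : option 'I_n := [pick k | (0 < a k)%N].
Definition md n (G : {set 'I_n}) (c : mono n) : mono n := [ffun l => (c l + (l \in G))%N].
Definition Hk (K : fieldType) n (f : vec K n) : vec K n := fun G c =>
  match pk (md G c) with
  | Some k => if k \in G then ksign K k (G :\ k) * f (G :\ k) (madd c (ek k)) else 0
  | None => 0 end.

Lemma md_U1 n (G : {set 'I_n}) (c : mono n) l : l \notin G -> (0 < c l)%N ->
  md (l |: G) (msub c (ek l)) = md G c.
Proof.
move=> lG cl; apply/ffunP => p; rewrite !ffunE !inE.
case: (eqVneq p l) => [->|pl] /=; last by rewrite subn0.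
by rewrite (negbTE lG); lia.
Qed.

Lemma md_D1 n (G : {set 'I_n}) (c : mono n) k : k \in G ->
  md (G :\ k) (madd c (ek k)) = md G c.
Proof.
move=> kG; apply/ffunP => p; rewrite !ffunE !inE.
case: (eqVneq p k) => [->|pk] /=; last by rewrite addn0.
by rewrite kG; lia.
Qed.

Lemma msubK_ek n (c : mono n) k : (0 < c k)%N -> madd (msub c (ek k)) (ek k) = c.
Proof.
move=> ck; apply/ffunP => p; rewrite !ffunE.
case: (eqVneq p k) => [->|pk] /=; [lia | by rewrite subn0 addn0].
Qed.

Lemma maddK_ek n (c : mono n) k : msub (madd c (ek k)) (ek k) = c.
Proof. by apply/ffunP => p; rewrite !ffunE addnK. Qed.

Lemma msub_madd_ek n (c : mono n) k l : (0 < c l)%N ->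
  madd (msub c (ek l)) (ek k) = msub (madd c (ek k)) (ek l).
Proof.
move=> cl; apply/ffunP => p; rewrite !ffunE.
case: (eqVneq p l) => [->|pl] /=; last by rewrite !subn0.
case: (l == k); lia.
Qed.

Lemma Dk_ext (K : fieldType) n (f g : vec K n) :
  (forall G c, f G c = g G c) -> forall G c, Dk f G c = Dk g G c.
Proof. by move=> fg G c; apply eq_bigr => k _; rewrite fg. Qed.

Lemma Dk_add (K : fieldType) n (f g : vec K n) G c :
  Dk (fun G c => f G c + g G c) G c = Dk f G c + Dk g G c.
Proof. by rewrite /Dk -big_split; apply eq_bigr => k _; rewrite mulrDr. Qed.

Lemma Dk_opp (K : fieldType) n (f : vec K n) G c :
  Dk (fun G c => - f G c) G c = - Dk f G c.
Proof. by rewrite /Dk -sumrN; apply eq_bigr => k _; rewrite mulrN. Qed.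

Lemma Dk_nz (K : fieldType) n (f : vec K n) G c : Dk f G c != 0 ->
  exists k, [/\ k \notin G, (0 < c k)%N & f (k |: G) (msub c (ek k)) != 0].
Proof.
move=> H.
case: (boolP [exists k, [&& k \notin G, (0 < c k)%N & f (k |: G) (msub c (ek k)) != 0]]).
  by case/existsP => k /and3P [? ? ?]; exists k.
move=> /existsPn Hn; exfalso; move/eqP: H; apply.
rewrite /Dk big1 // => k /andP [kG ck]; move: (Hn k).
by rewrite kG ck /= negbK => /eqP ->; rewrite mulr0.
Qed.

Lemma homotopy (K : fieldType) n (f : vec K n) (G : {set 'I_n}) (c : mono n) :
  (f G c != 0 -> G != set0) -> Dk (Hk f) G c + Hk (Dk f) G c = f G c.
Proof.
move=> Hsupp.
rewrite {2}/Hk; case E: (pk (md G c)) => [k|]; last first.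
  have H0 : forall x, ~~ (0 < md G c x)%N.
    by move: E; rewrite /pk; case: pickP => // H _ x; rewrite H.
  rewrite addr0 /Dk big1; last first.
    move=> l /andP [lG cl]; have := H0 l; rewrite ffunE; lia.
  case: (eqVneq (f G c) 0) => // /Hsupp /set0Pn [x xG].
  by have := H0 x; rewrite ffunE xG; lia.
have kpos : (0 < md G c k)%N.
  by move: E; rewrite /pk; case: pickP => // x Hx [<-].
have HkF : forall l, l \notin G -> (0 < c l)%N -> Hk f (l |: G) (msub c (ek l)) =
   if k \in l |: G then ksign K k ((l |: G) :\ k) *
     f ((l |: G) :\ k) (madd (msub c (ek l)) (ek k)) else 0.
  by move=> l lG cl; rewrite /Hk md_U1 // E.
case: (boolP (k \in G)) => kG; last first.
  rewrite addr0 /Dk (bigD1 k) /=; last first.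
    by rewrite kG /=; move: kpos; rewrite ffunE (negbTE kG) addn0.
  have ck : (0 < c k)%N by move: kpos; rewrite ffunE (negbTE kG) addn0.
  rewrite HkF // setU11 setU1K // msubK_ek // mulrA sign_sq mul1r big1 ?addr0 //.
  move=> l /andP [/andP [lG cl] lk]; rewrite HkF // !inE eq_sym (negbTE lk).
  by rewrite (negbTE kG) mulr0.
set G' := G :\ k.
have GG : G = k |: G' by rewrite setD1K.
have kG' : k \notin G' by rewrite !inE eqxx.
rewrite /Dk [X in _ + _ * X](bigD1 k) /=; last first.
  by rewrite kG' /= !ffunE eqxx addn1.
rewrite /G' setD1K // maddK_ek mulrDr mulrA sign_sq mul1r -/G'.
rewrite addrCA [X in _ + X = _](_ : _ = 0) ?addr0 //.
rewrite mulr_sumr.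
rewrite [X in _ + X](eq_bigl (fun l => (l \notin G) && (0 < c l)%N)); last first.
  move=> l; rewrite /G' !inE !ffunE.
  case: (eqVneq l k) => [->|lk]; first by rewrite kG /= andbF.
  by rewrite /= addn0 andbT.
rewrite -big_split /= big1 // => l /andP [lG cl].
have lk : l != k by apply: contraNneq lG => ->.
have lG' : l \notin G' by rewrite !inE negb_and lG orbT.
rewrite HkF // !inE kG orbT.
have -> : (l |: G) :\ k = l |: G'.
  by apply/setP => x; rewrite /G' !inE; case: (eqVneq x k) => //= ->; rewrite eq_sym (negbTE lk).
rewrite msub_madd_ek //.
have -> : ksign K l G = ksign K l (k |: G') by rewrite -GG.
rewrite !mulrA ksign_swap 1?eq_sym //.
by rewrite mulNr addNr.
Qed.

Definition vld n (J : monideal n) (i j : nat) (G : {set 'I_n}) (c : mono n) : bool :=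
  [&& #|G| == i, (mdeg c + #|G| == j)%N & J c].
Definition supp (K : fieldType) n (f : vec K n) (P : {set 'I_n} -> mono n -> bool) :=
  forall G c, f G c != 0 -> P G c.
Definition Tor0 (K : fieldType) n (J : monideal n) (i j : nat) : Prop :=
  forall f : vec K n, supp f (vld J i j) -> (forall G c, Dk f G c = 0) ->
  exists g : vec K n, supp g (vld J i.+1 j) /\ forall G c, Dk g G c = f G c.
Definition upc n (J : monideal n) := forall b k, J b -> J (madd b (ek k)).

Lemma mdeg_madd n (a b : mono n) : mdeg (madd a b) = (mdeg a + mdeg b)%N.
Proof. by rewrite /mdeg -big_split; apply eq_bigr => l _; rewrite ffunE. Qed.

Lemma mdeg_ek n (k : 'I_n) : mdeg (ek k) = 1%N.
Proof.
rewrite /mdeg (bigD1 k) //= ffunE eqxx big1 // => l lk.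
by rewrite ffunE (negbTE lk).
Qed.

Lemma mdeg_msub n (b m : mono n) : (forall l, m l <= b l)%N ->
  (mdeg (msub b m) + mdeg m)%N = mdeg b.
Proof.
move=> H; rewrite /mdeg -big_split; apply eq_bigr => l _; rewrite ffunE /=; have := H l; lia.
Qed.

Lemma mdeg_msub_ek n (c : mono n) k : (0 < c k)%N -> (mdeg (msub c (ek k)) + 1)%N = mdeg c.
Proof. by move=> ck; rewrite -{2}(msubK_ek ck) mdeg_madd mdeg_ek. Qed.

Lemma Dk_supp (K : fieldType) n (J : monideal n) (f : vec K n) p j : upc J ->
  supp f (vld J p.+1 j) -> supp (Dk f) (vld J p j).
Proof.
move=> uJ sf G c /Dk_nz [k [kG ck /sf /and3P [/eqP h1 /eqP h2 h3]]].
move: h1 h2; rewrite cardsU1 kG => h1 h2.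
have := mdeg_msub_ek ck => h4.
apply/and3P; split; [apply/eqP; lia | apply/eqP; lia |].
by rewrite -(msubK_ek ck); apply: uJ.
Qed.

Lemma Hk_supp (K : fieldType) n (J : monideal n) (f : vec K n) p j :
  supp f (vld J p j) -> supp (Hk f) (vld (fun _ => true) p.+1 j).
Proof.
move=> sf G c; rewrite /Hk; case: (pk (md G c)) => [k|]; last by rewrite eqxx.
case: ifP => kG; last by rewrite eqxx.
move=> H; have : f (G :\ k) (madd c (ek k)) != 0.
  by apply: contraNneq H => ->; rewrite mulr0.
move=> /sf /and3P [/eqP h1 /eqP h2 _].
move: h2; rewrite mdeg_madd mdeg_ek => h2.
have := cardsD1 k G; rewrite kG add1n => h3.
by apply/and3P; split => //; apply/eqP; rewrite h3 ?h1 // -h2; lia.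
Qed.

Lemma exact_S (K : fieldType) n (J : monideal n) (f : vec K n) p j :
  supp f (vld J p.+1 j) -> (forall G c, Dk f G c = 0) ->
  exists t : vec K n, supp t (vld (fun _ => true) p.+2 j) /\
    forall G c, Dk t G c = f G c.
Proof.
move=> sf Df; exists (Hk f); split; first exact: Hk_supp sf.
move=> G c; rewrite -(homotopy (f := f)); last first.
  move=> /sf /and3P [/eqP h1 _ _]; apply/eqP => G0; move: h1.
  by rewrite G0 cards0.
suff -> : Hk (Dk f) G c = 0 by rewrite addr0.
rewrite /Hk; case: (pk (md G c)) => // k; case: ifP => // _.
by rewrite Df mulr0.
Qed.

Definition shdown (K : fieldType) n (m : mono n) (f : vec K n) : vec K n :=
  fun G c => f G (madd c m).
Definition shup (K : fieldType) n (m : mono n) (f : vec K n) : vec K n :=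
  fun G b => if mdvd m b then f G (msub b m) else 0.

Lemma mdvd_msubK n (m b : mono n) : mdvd m b -> madd (msub b m) m = b.
Proof.
move=> /forallP H; apply/ffunP => l; rewrite !ffunE subnK //; exact: H.
Qed.

Lemma mdvd_le n (m b : mono n) : mdvd m b -> (mdeg m <= mdeg b)%N.
Proof.
move=> /forallP H; rewrite -(mdeg_msub H); lia.
Qed.

Lemma Dk_shup (K : fieldType) n (m : mono n) (f : vec K n) G b :
  Dk (shup m f) G b = shup m (Dk f) G b.
Proof.
rewrite /shup /Dk; case: ifP => mb.
  rewrite big_mkcond [RHS]big_mkcond; apply eq_bigr => k _ /=.
  case: (boolP (k \in G)) => //= kG.
  move/forallP: (mb) => H.
  have E : (0 < b k)%N && mdvd m (msub b (ek k)) = (0 < msub b m k)%N.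
    rewrite ffunE; apply/idP/idP.
      case/andP => bk /forallP /(_ k); rewrite !ffunE eqxx /=; lia.
    move=> h; apply/andP; split; first lia.
    apply/forallP => l; rewrite !ffunE; case: (eqVneq l k) => [->|lk] /=; first lia.
    by rewrite subn0 H.
  case: (boolP (0 < b k)%N) => bk /=; last first.
    by move: E; rewrite (negbTE bk) /= => <-.
  move: E; rewrite bk /= => <-; case: ifP => _ /=; last by rewrite mulr0.
  congr (_ * f _ _); apply/ffunP => l; rewrite !ffunE; lia.
rewrite big1 // => k /andP [kG bk]; case: ifP; last by rewrite mulr0.
move/forallP => H; move: mb; have : mdvd m b.
  apply/forallP => l; have := H l; rewrite ffunE; lia.
by move=> ->.
Qed.

Lemma Dk_shdown (K : fieldType) n (m : mono n) (f : vec K n) G c :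
  supp f (fun _ b => mdvd m b) -> Dk (shdown m f) G c = Dk f G (madd c m).
Proof.
move=> sf; rewrite /shdown /Dk big_mkcond [RHS]big_mkcond; apply eq_bigr => k _ /=.
case: (boolP (k \in G)) => //= kG; rewrite ffunE.
case: (boolP (0 < c k)%N) => ck /=.
  have -> : (0 < c k + m k)%N by lia.
  congr (_ * f _ _); apply/ffunP => l; rewrite !ffunE; case: (eqVneq l k) => [->|] /=; lia.
case: ifP => // h; case: (eqVneq (f (k |: G) (msub (madd c m) (ek k))) 0) => [->|];
  first by rewrite mulr0.
move=> /sf /forallP /(_ k); rewrite !ffunE eqxx; lia.
Qed.

Lemma supp_add (K : fieldType) n (f g : vec K n) P :
  supp f P -> supp g P -> supp (fun G c => f G c + g G c) P.
Proof.
move=> sf sg G c H; case: (eqVneq (f G c) 0) => [E|]; last exact: sf.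
by apply: sg; move: H; rewrite E add0r.
Qed.

Lemma supp_sub (K : fieldType) n (f g : vec K n) P :
  supp f P -> supp g P -> supp (fun G c => f G c - g G c) P.
Proof.
move=> sf sg G c H; case: (eqVneq (f G c) 0) => [E|]; last exact: sf.
by apply: sg; move: H; rewrite E sub0r oppr_eq0.
Qed.

Lemma supp_impl (K : fieldType) n (f : vec K n) (P Q : {set 'I_n} -> mono n -> bool) :
  (forall G c, P G c -> Q G c) -> supp f P -> supp f Q.
Proof. by move=> PQ sf G c /sf; apply: PQ. Qed.

Lemma core (K : fieldType) n (J : monideal n) (m : mono n) i j : upc J ->
  Tor0 K (fun b => J b || mdvd m b) i j ->
  (forall j', j = (j' + mdeg m)%N -> Tor0 K (colon J m) i j') ->
  Tor0 K J i j.
Proof.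
move=> uJ T1 T2 z sz Dz.
have [w [sw Dw]] : exists w : vec K n, supp w (vld (fun b => J b || mdvd m b) i.+1 j)
   /\ forall G c, Dk w G c = z G c.
  apply: T1 Dz; apply: supp_impl sz => G c /and3P [h1 h2 h]; by rewrite /vld h1 h2 h.
pose w1 : vec K n := fun G c => if J c then w G c else 0.
pose w2 : vec K n := fun G c => if J c then 0 else w G c.
have sw1 : supp w1 (vld J i.+1 j).
  move=> G c; rewrite /w1; case: ifP => Jc; last by rewrite eqxx.
  by move=> /sw /and3P [h1 h2 _]; rewrite /vld h1 h2 Jc.
have sw2 : supp w2 (fun G c => vld (fun _ => true) i.+1 j G c && mdvd m c).
  move=> G c; rewrite /w2; case: ifP => Jc; first by rewrite eqxx.
  by move=> /sw /and3P [h1 h2]; rewrite /vld h1 h2 Jc.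
have sw2m : supp w2 (fun _ c => mdvd m c).
  by apply: supp_impl sw2 => G c /andP [].
have Dw2 : forall G c, Dk w2 G c = z G c - Dk w1 G c.
  move=> G c; rewrite -Dw -Dk_opp -Dk_add; apply: Dk_ext => H b.
  by rewrite /w1 /w2; case: ifP => _; rewrite ?subr0 ?subrr.
have key : forall G c, Dk w2 G c = Dk (shup m (shdown m w2)) G c.
  apply: Dk_ext => G b; rewrite /shup /shdown; case: ifP => mb.
    by rewrite mdvd_msubK.
  by case: (eqVneq (w2 G b) 0) => // /sw2m; rewrite mb.
case: (leqP (mdeg m) j) => hj; last first.
  exists w1; split => // G c.
  suff h0 : Dk w2 G c = 0.
    by move: (Dw2 G c); rewrite h0 => /esym /eqP; rewrite subr_eq0 => /eqP ->.
  rewrite /Dk big1 // => k _; case: (eqVneq (w2 (k |: G) (msub c (ek k))) 0) => [->|];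
    first by rewrite mulr0.
  move=> /sw2 /andP [/and3P [_ /eqP h _] /mdvd_le]; lia.
pose j' := (j - mdeg m)%N.
have ej : j = (j' + mdeg m)%N by rewrite /j'; lia.
pose w2' := shdown m w2.
pose q := Dk w2'.
have Eq : forall G c, q G c = z G (madd c m) - Dk w1 G (madd c m).
  by move=> G c; rewrite /q /w2' Dk_shdown // Dw2.
have sq : supp q (vld (colon J m) i j').
  move=> G c; rewrite Eq => H.
  have : vld J i j G (madd c m).
    case: (eqVneq (z G (madd c m)) 0) => [E|]; last exact: sz.
    apply: (Dk_supp uJ sw1); by move: H; rewrite E sub0r oppr_eq0.
  case/and3P => /eqP h1 /eqP h2 h3; apply/and3P; split => //.
    by apply/eqP.
  apply/eqP; move: h2; rewrite mdeg_madd; lia.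
have [u [su Du]] := T2 j' ej q sq (fun G c => DD0 w2' G c).
pose v : vec K n := fun G c => w2' G c - u G c.
have sv : supp v (vld (fun _ => true) i.+1 j').
  apply: supp_sub.
    move=> G c /sw2 /andP [/and3P [h1 /eqP h2 _] _]; apply/and3P; split => //.
    apply/eqP; move: h2; rewrite mdeg_madd; lia.
  by apply: supp_impl su => G c /and3P [h1 h2 _]; rewrite /vld h1 h2.
have Dv : forall G c, Dk v G c = 0.
  by move=> G c; rewrite /v Dk_add Dk_opp Du subrr.
have [t [_ Dt]] := exact_S sv Dv.
exists (fun G c => w1 G c + shup m u G c); split.
  apply: supp_add => // G b; rewrite /shup; case: ifP => mb; last by rewrite eqxx.
  move=> /su /and3P [h1 /eqP h2 h3]; apply/and3P; split => //.
    apply/eqP; rewrite -(mdeg_msub (m := m) (b := b)); last by apply/forallP.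
    lia.
  by move: h3; rewrite /colon -/(madd (msub b m) m) mdvd_msubK.
move=> G c; rewrite Dk_add.
have -> : Dk (shup m u) G c = Dk w2 G c.
  rewrite key; have E : forall G b, shup m w2' G b = shup m u G b + shup m (Dk t) G b.
    move=> H b; rewrite /shup; case: ifP => _; last by rewrite addr0.
    by rewrite Dt /v addrC subrK.
  rewrite (Dk_ext E) Dk_add (Dk_shup m (Dk t)) /shup.
  by case: ifP => _; rewrite ?DD0 addr0.
by rewrite Dw2 addrC subrK.
Qed.

Definition bnd n j (c : mono n) : {ffun 'I_n -> 'I_j.+1} := [ffun l => inord (c l)].
Definition xex n j (x : KIdx n j) : bool := (mdeg (kexp x) + #|x.1| == j)%N.
Definition toF (K : fieldType) n j (v : 'rV[K]_(kN n j)) : vec K n := fun G c =>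
  if (mdeg c + #|G| == j)%N then v 0 (enum_rank ((G, bnd j c) : KIdx n j)) else 0.
Definition toV (K : fieldType) n j (f : vec K n) : 'rV[K]_(kN n j) :=
  \row_u f (enum_val u).1 (kexp (enum_val u)).
Definition exsupp (K : fieldType) n j (v : 'rV[K]_(kN n j)) :=
  forall u, v 0 u != 0 -> xex (enum_val u).

Lemma leq_mdeg n (c : mono n) l : (c l <= mdeg c)%N.
Proof. by rewrite /mdeg (bigD1 l) //= leq_addr. Qed.

Lemma kexp_bnd n j (G : {set 'I_n}) (c : mono n) : (mdeg c + #|G| == j)%N ->
  kexp ((G, bnd j c) : KIdx n j) = c.
Proof.
move=> /eqP h; apply/ffunP => l; rewrite !ffunE /= inordK //.
have := leq_mdeg c l; lia.
Qed.

Lemma bnd_kexp n j (x : KIdx n j) : bnd j (kexp x) = x.2.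
Proof. by apply/ffunP => l; rewrite !ffunE inord_val. Qed.

Lemma KIdx_eta n j (x : KIdx n j) : ((x.1, bnd j (kexp x)) : KIdx n j) = x.
Proof. by rewrite bnd_kexp; case: x. Qed.

Lemma toF_entry (K : fieldType) n j (v : 'rV[K]_(kN n j)) u :
  xex (enum_val u) -> toF v (enum_val u).1 (kexp (enum_val u)) = v 0 u.
Proof. by move=> h; rewrite /toF ifT // KIdx_eta enum_valK. Qed.

Lemma toF_inj (K : fieldType) n j (v1 v2 : 'rV[K]_(kN n j)) :
  exsupp v1 -> exsupp v2 -> (forall G c, toF v1 G c = toF v2 G c) -> v1 = v2.
Proof.
move=> s1 s2 E; apply/rowP => u.
case: (boolP (xex (enum_val u))) => h; first by rewrite -!toF_entry.
case: (eqVneq (v1 0 u) 0) => [->|/s1]; last by rewrite (negbTE h).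
case: (eqVneq (v2 0 u) 0) => [->|/s2] //; by rewrite (negbTE h).
Qed.

Lemma toF_toV (K : fieldType) n j (f : vec K n) G c :
  supp f (fun G c => mdeg c + #|G| == j)%N -> toF (toV j f) G c = f G c.
Proof.
move=> sf; rewrite /toF /toV; case: ifP => h.
  by rewrite mxE enum_rankK /= kexp_bnd.
by case: (eqVneq (f G c) 0) => // /sf; rewrite h.
Qed.

Lemma sum_nz (K : fieldType) (I : finType) (P : pred I) (F : I -> K) :
  \sum_(i | P i) F i != 0 -> exists i, P i && (F i != 0).
Proof.
move=> H; case: (boolP [exists i, P i && (F i != 0)]); first by move/existsP.
move=> /existsPn Hn; exfalso; move/eqP: H; apply; apply: big1 => i Pi.
by move: (Hn i); rewrite Pi /= negbK => /eqP.
Qed.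

Lemma kentry_nz (K : fieldType) n j (x y : KIdx n j) : kentry K x y != 0 ->
  exists k, [/\ k \in x.1, y.1 = x.1 :\ k & forall l, (nat_of_ord (y.2 l) = x.2 l + (l == k))%N].
Proof.
move=> /sum_nz [k /andP [kx]]; case: ifP; last by rewrite eqxx.
by move=> /andP [/eqP h1 /forallP h2] _; exists k; split => // l; apply/eqP.
Qed.

Lemma exsupp_mulD (K : fieldType) n j (v : 'rV[K]_(kN n j)) :
  exsupp v -> exsupp (v *m kdiff K n j).
Proof.
move=> sv w; rewrite mxE => /sum_nz [u /andP [_]]; rewrite mxE.
case: (eqVneq (v 0 u) 0) => [->|/sv hu]; first by rewrite mul0r eqxx.
move=> H; have : kentry K (enum_val u) (enum_val w) != 0.
  by apply: contraNneq H => ->; rewrite mulr0.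
move=> /kentry_nz [k [kx h1 h2]]; move: hu; rewrite /xex h1.
have -> : kexp (enum_val w) = madd (kexp (enum_val u)) (ek k).
  by apply/ffunP => l; rewrite !ffunE h2.
rewrite mdeg_madd mdeg_ek; have := cardsD1 k (enum_val u).1; rewrite kx add1n.
move=> hc /eqP he; apply/eqP; rewrite hc in he; by rewrite addn1 addSnnS.
Qed.

Lemma cond_char n j (G : {set 'I_n}) (c : mono n) (x : KIdx n j) k :
  (mdeg c + #|G| == j)%N ->
  ((k \in x.1) && ((G == x.1 :\ k) &&
     [forall l, nat_of_ord (bnd j c l) == (x.2 l + (l == k))%N]))
  = [&& k \notin G, (0 < c k)%N & x == ((k |: G, bnd j (msub c (ek k))) : KIdx n j)].
Proof.
move=> /eqP hex.
have bc : forall l, nat_of_ord (bnd j c l) = c l.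
  by move=> l; rewrite ffunE inordK //; have := leq_mdeg c l; lia.
apply/idP/idP.
  case/and3P => kx /eqP hG /forallP hc.
  have kG : k \notin G by rewrite hG !inE eqxx.
  have ck : (0 < c k)%N by have := hc k; rewrite bc eqxx /=; lia.
  rewrite kG ck /=; apply/eqP.
  case: x kx hG hc => [F b] /= kx hG hc; congr pair; first by rewrite hG setD1K.
  apply/ffunP => l; apply/val_inj; rewrite /= ffunE inordK ?ffunE.
    by have := hc l; rewrite bc; case: (l == k) => /=; lia.
  have := leq_mdeg c l; lia.
case/and3P => kG ck /eqP -> /=; rewrite setU11 setU1K // eqxx /=.
apply/forallP => l; rewrite bc ffunE inordK ?ffunE.
  by case: (eqVneq l k) => [->|] /=; lia.
have := leq_mdeg c l; lia.
Qed.

Lemma toF_mulD (K : fieldType) n j (v : 'rV[K]_(kN n j)) G c :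
  toF (v *m kdiff K n j) G c = Dk (toF v) G c.
Proof.
rewrite /toF; case: ifP => hex; last first.
  symmetry; rewrite /Dk big1 // => k /andP [kG ck].
  rewrite ifF ?mulr0 //; move: hex; rewrite cardsU1 kG /=.
  have e := mdeg_msub_ek ck; apply: contraFF => /eqP h; apply/eqP; lia.
rewrite mxE.
transitivity (\sum_(x : KIdx n j) v 0 (enum_rank x) *
   kentry K x ((G, bnd j c) : KIdx n j)).
  rewrite (reindex enum_rank) /=; last first.
    by exists enum_val => x _; rewrite ?enum_rankK ?enum_valK.
  by apply eq_bigr => x _; rewrite mxE !enum_rankK.
under eq_bigr do rewrite /kentry mulr_sumr big_mkcond /=.
rewrite exchange_big /Dk [RHS]big_mkcond /=; apply eq_bigr => k _.
case: (boolP ((k \notin G) && (0 < c k)%N)) => H.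
  case/andP: (H) => kG ck.
  rewrite (bigD1 ((k |: G, bnd j (msub c (ek k))) : KIdx n j)) //= big1.
    rewrite setU11 setU1K // eqxx /= ifT; last first.
      apply/forallP => l; rewrite !ffunE !inordK ?ffunE.
      - by case: (eqVneq l k) => [->|] /=; lia.
      - have := leq_mdeg c l; move/eqP: hex; lia.
      - have := leq_mdeg c l; move/eqP: hex; lia.
    rewrite ifT; last first.
      by rewrite cardsU1 kG; have := mdeg_msub_ek ck; move/eqP: hex; lia.
    by rewrite addr0 ksign_U1_self mulrC.
  move=> x xne; case: ifP => // kx; case: ifP => hc; last by rewrite mulr0.
  by have := cond_char x k hex; rewrite kx /= hc (negbTE xne) !andbF.
rewrite big1 // => x _; case: ifP => // kx; case: ifP => hc; last by rewrite mulr0.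
have := cond_char x k hex; rewrite kx /= hc.
by move: H; case: (k \in G); case: (0 < c k)%N.
Qed.

Lemma kproj_entry (K : fieldType) n (J : monideal n) i j (x : 'rV[K]_(kN n j)) u :
  (x *m kproj K J i j) 0 u = if kvalid J i (enum_val u) then x 0 u else 0.
Proof.
rewrite mxE (bigD1 u) //= mxE eqxx /= big1 => [|w wu]; last by rewrite mxE (negbTE wu) mulr0.
by case: ifP; rewrite ?mulr1 ?mulr0 addr0.
Qed.

Lemma toV_proj (K : fieldType) n (J : monideal n) p j (g : vec K n) :
  supp g (vld J p j) -> toV j g *m kproj K J p j = toV j g.
Proof.
move=> sg; apply/rowP => u; rewrite kproj_entry; case: ifP => // hv.
rewrite mxE; case: (eqVneq (g (enum_val u).1 (kexp (enum_val u))) 0) => // /sg h.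
by have h' : kvalid J p (enum_val u) := h; rewrite h' in hv.
Qed.

Lemma toV_ex (K : fieldType) n (J : monideal n) p j (g : vec K n) :
  supp g (vld J p j) -> exsupp (toV j g).
Proof.
by move=> sg u; rewrite mxE => /sg /and3P [_ h _].
Qed.

Lemma toF0 (K : fieldType) n j G c : toF (0 : 'rV[K]_(kN n j)) G c = 0.
Proof. by rewrite /toF mxE; case: ifP. Qed.

Lemma toF_proj_supp (K : fieldType) n (J : monideal n) p j (x : 'rV[K]_(kN n j)) :
  supp (toF (x *m kproj K J p j)) (vld J p j).
Proof.
move=> G c; rewrite /toF; case: ifP => hex; last by rewrite eqxx.
rewrite kproj_entry enum_rankK; case: ifP => hv; last by rewrite eqxx.
move=> _; move: hv; rewrite /kvalid kexp_bnd //.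
Qed.

Lemma TorE (K : fieldType) n (J : monideal n) i j :
  Tor_nz K J i j = false <-> Tor0 K J i j.
Proof.
split.
  move=> HT f sf Df.
  have Hsub : (kproj K J i j :&: kermx (kdiff K n j) <= kproj K J i.+1 j *m kdiff K n j)%MS.
    by move: HT; rewrite /Tor_nz => /negbFE.
  set vv := toV j f.
  have vP : vv *m kproj K J i j = vv by apply: toV_proj.
  have vex : exsupp vv by apply: toV_ex sf.
  have sfx : supp f (fun G c => mdeg c + #|G| == j)%N.
    by apply: supp_impl sf => G c /and3P [].
  have vD : vv *m kdiff K n j = 0.
    apply: toF_inj; [exact: exsupp_mulD | by move=> u; rewrite mxE eqxx |].
    move=> G c; rewrite toF_mulD toF0 -(Df G c); apply: Dk_ext => H b.
    exact: toF_toV.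
  have : (vv <= kproj K J i.+1 j *m kdiff K n j)%MS.
    apply: submx_trans Hsub; rewrite sub_capmx sub_kermx vD eqxx andbT.
    by apply/submxP; exists vv; rewrite vP.
  case/submxP => w Ew.
  exists (toF (w *m kproj K J i.+1 j)); split; first exact: toF_proj_supp.
  by move=> G c; rewrite -toF_mulD -mulmxA -Ew toF_toV.
move=> T0; rewrite /Tor_nz; apply: negbF.
apply/rV_subP => v; rewrite sub_capmx => /andP [/submxP [x Ex] /sub_kermxP vD].
set f := toF v.
have sf : supp f (vld J i j) by rewrite /f Ex; exact: toF_proj_supp.
have vex : exsupp v.
  move=> u; rewrite Ex kproj_entry; case: ifP => [/and3P [_ h _] //|]; by rewrite eqxx.
have Df : forall G c, Dk f G c = 0.
  by move=> G c; rewrite -toF_mulD vD toF0.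
have [g [sg Dg]] := T0 f sf Df.
apply/submxP; exists (toV j g); rewrite mulmxA toV_proj //.
have sgx : supp g (fun G c => mdeg c + #|G| == j)%N.
  by apply: supp_impl sg => G c /and3P [].
apply: toF_inj => //; first by apply: exsupp_mulD; exact: toV_ex sg.
move=> G c; rewrite toF_mulD -/f -Dg; apply: Dk_ext => H b.
by rewrite toF_toV.
Qed.

Lemma Tor_nz_ext (K : fieldType) n (J1 J2 : monideal n) i j :
  (forall b, J1 b = J2 b) -> Tor_nz K J1 i j = Tor_nz K J2 i j.
Proof.
move=> E; rewrite /Tor_nz.
have EP : forall p, kproj K J1 p j = kproj K J2 p j.
  by move=> p; apply/matrixP => u w; rewrite !mxE /kvalid E.
by rewrite !EP.
Qed.

Lemma step (K : fieldType) n (J : monideal n) (m : mono n) i j : upc J ->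
  Tor_nz K J i j ->
  Tor_nz K (fun b => J b || mdvd m b) i j \/
  exists j', j = (j' + mdeg m)%N /\ Tor_nz K (colon J m) i j'.
Proof.
move=> uJ HT.
case E1: (Tor_nz K (fun b => J b || mdvd m b) i j); first by left.
case E2: ((mdeg m <= j)%N && Tor_nz K (colon J m) i (j - mdeg m)).
  right; exists (j - mdeg m)%N; move: E2 => /andP [h1 h2]; split => //; lia.
have : Tor_nz K J i j = false; last by rewrite HT.
apply/TorE; apply: (core uJ); first exact: (proj1 (TorE _ _ _ _) E1).
move=> j' ej; apply/TorE; move: E2; rewrite ej addnK leq_addl.
by [].
Qed.

Lemma upc_mdvd n (g b : mono n) k : mdvd g b -> mdvd g (madd b (ek k)).
Proof.
move=> /forallP H; apply/forallP => l; rewrite !ffunE; have := H l; lia.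
Qed.

Lemma upc_addgen n (gs ms : seq (mono n)) : upc (addgen (gen gs) ms).
Proof.
move=> b k; rewrite /addgen /gen => /orP [] /hasP [g gin gb]; apply/orP;
  [left|right]; apply/hasP; exists g => //; exact: upc_mdvd.
Qed.

Lemma main_int (r : int) (i j j' n1 : nat) :
  j = (j' + n1)%N -> (j'%:Z - i%:Z <= r - n1%:Z)%R -> (j%:Z - i%:Z <= r)%R.
Proof. move=> ->; lia. Qed.

Unset Implicit Arguments.

Theorem lemma5p1 (K : fieldType) (n n1 n2 : nat)
    (ms : seq (mono n)) (gs : seq (mono n)) :
  (0 < size ms)%N -> uniq ms ->
  all (fun m => squarefree m && (mdeg m == n1)) ms ->
  all (fun g => squarefree g && (mdeg g == n2)) gs ->
  (forall b, gen gs b -> gen ms b) ->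
  (n1 < n2)%N ->
  forall r : int,
    reg_le K (colon (gen gs) (nth [ffun=> 0%N] ms 0)) (r - n1%:Z) ->
    (forall l : nat, (1 <= l <= (size ms).-1)%N ->
       reg_le K (colon (addgen (gen gs) (take l ms)) (nth [ffun=> 0%N] ms l))
              (r - n1%:Z)) ->
    reg_le K (gen ms) r ->
    reg_le K (gen gs) r.
Proof.
move=> Hsz Hu Hms Hgs Hsub Hn r HA HB HC.
set k := size ms.
pose Jl l : monideal n := addgen (gen gs) (take l ms).
have Hdeg : forall l, (l < k)%N -> mdeg (nth [ffun=> 0%N] ms l) = n1.
  move=> l hl; have := allP Hms _ (mem_nth [ffun=> 0%N] hl).
  by case/andP => _ /eqP.
have Ind : forall d, (d <= k)%N -> forall i j, Tor_nz K (Jl (k - d)%N) i j ->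
    (j%:Z - i%:Z <= r)%R.
  elim => [|d IH] hd i j.
    rewrite subn0 => HT; apply: HC.
    rewrite -(@Tor_nz_ext K n (Jl k) (gen ms)) // => b.
    rewrite /Jl /addgen take_size; case: (boolP (gen gs b)) => //= /Hsub ->.
    by [].
  set l := (k - d.+1)%N.
  have hl : (l < k)%N by rewrite /l; lia.
  move=> HT.
  case: (@step K n (Jl l) (nth [ffun=> 0%N] ms l) i j (@upc_addgen n gs (take l ms)) HT)
    => [H1|[j' [ej H2]]].
    apply: (IH (ltnW hd)); rewrite (@Tor_nz_ext K n _ (fun b => Jl l b || mdvd (nth [ffun=> 0%N] ms l) b)) //.
    move=> b; have -> : (k - d)%N = l.+1 by rewrite /l; lia.
    rewrite /Jl /addgen /gen (take_nth [ffun=> 0%N] hl) has_rcons.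
    by case: (has _ gs); case: (mdvd _ b); case: (has _ (take l ms)).
  rewrite Hdeg // in ej; apply: (main_int ej).
  case: (posnP l) => [l0|lpos].
    apply: HA; rewrite -(@Tor_nz_ext K n (colon (Jl l) (nth [ffun=> 0%N] ms l))) //.

    by move=> b; rewrite /colon /Jl /addgen l0 /gen take0 /= orbF.
  apply: (HB l) => //; apply/andP; split; first by [].
  by rewrite /k in hl; lia.
move=> i j HT; have := Ind k (leqnn k); rewrite subnn; apply.
rewrite (@Tor_nz_ext K n _ (gen gs)) // => b.
by rewrite /Jl /addgen /gen take0 /= orbF.
Qed.
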